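(* For every $\epsilon>0$ and every $m\in\mathbb N$ there exist $\delta>0$ and $n_0\in\mathbb N$ such that the following holds. If $n>n_0$ and $\sigma\in S_n$ has at most $n^{\delta}$ cycles of length $i$ for each $i<m$, then $E(\sigma)\le 1/m+\epsilon$.
   Context: For $\sigma\in S_n$ let $f_\sigma(i)$ be the number of $i$-cycles of $\sigma$ (fixed points are $1$-cycles). Define $e_1,\dots,e_n$ by $e_1+\cdots+e_k=\max\left(\frac{\log\left(\sum_{i=1}^k i f_\sigma(i)\right)}{\log n},0\right)$ for $1\le k\le n$ (with $\log 0=-\infty$), and set $E(\sigma)=\sum_{i=1}^n e_i/i$. *)

(* Defs.v *)
From mathcomp Require Import all_boot all_fingroup.
From Stdlib Require Import Reals.
Set Implicit Arguments. Unset Strict Implicit. Unset Printing Implicit Defensive.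

(* f_sigma(i): number of i-cycles of sigma (fixed points are 1-cycles). *)
Definition cycle_count (n : nat) (s : {perm 'I_n}) (i : nat) : nat :=
  #|[set C in porbits s | #|C| == i]|.

(* partial sum  e_1 + ... + e_k = max(log(sum_{i<=k} i f(i)) / log n, 0),
   with log 0 = -oo, i.e. the value is 0 when the inner sum is 0. *)
Definition partialE (n : nat) (s : {perm 'I_n}) (k : nat) : R :=
  let t := (\sum_(1 <= i < k.+1) i * cycle_count s i)%N in
  if t == 0%N then 0%R else Rmax (ln (INR t) / ln (INR n))%R 0%R.

Definition e_coef (n : nat) (s : {perm 'I_n}) (k : nat) : R :=
  (partialE s k - partialE s k.-1)%R.

Definition Evalue (n : nat) (s : {perm 'I_n}) : R :=
  List.fold_right Rplus 0%R (List.map (fun i => e_coef s i / INR i)%R (iota 1 n)).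

(* Main.v *)
Require Import Defs.
From mathcomp Require Import all_boot all_fingroup.
From Stdlib Require Import Reals Lra Lia.
Set Implicit Arguments. Unset Strict Implicit. Unset Printing Implicit Defensive.

Definition tsum (n : nat) (s : {perm 'I_n}) (k : nat) : nat :=
  (\sum_(1 <= i < k.+1) i * cycle_count s i)%N.

Lemma triv_porbits (T : finType) (s : {perm T}) : trivIset (porbits s).
Proof.
apply/trivIsetP => A B /imsetP[i _ ->] /imsetP[j _ ->] nij.
rewrite -setI_eq0; apply/eqP/setP => z; rewrite !inE.
apply/negbTE/negP => /andP[zi zj]; move/negP: nij; apply.
have e1 : porbit s z == porbit s i by rewrite eq_porbit_mem.
have e2 : porbit s z == porbit s j by rewrite eq_porbit_mem.
by rewrite -(eqP e1) -(eqP e2).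
Qed.

Lemma inner_le (c k : nat) : (\sum_(1 <= i < k.+1) (c == i) * c <= c)%N.
Proof.
elim: k => [|k IH]; first by rewrite big_geq.
rewrite big_nat_recr //=.
case: (eqVneq c k.+1) => [->|ne].
  rewrite mul1n. have -> : (\sum_(1 <= i < k.+1) (k.+1 == i) * k.+1 = 0)%N.
    rewrite big1_seq // => i /andP[_]; rewrite mem_index_iota => /andP[_ lt].
    by rewrite (gtn_eqF lt).
  by rewrite add0n.
by rewrite mul0n addn0.
Qed.

Lemma tsum_le (n : nat) (s : {perm 'I_n}) k : (tsum s k <= n)%N.
Proof.
rewrite /tsum.
have -> : (\sum_(1 <= i < k.+1) i * cycle_count s i =
   \sum_(1 <= i < k.+1) \sum_(C in porbits s) (#|C| == i) * #|C|)%N.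
  apply: eq_bigr => i _; rewrite /cycle_count -sum1_card big_distrr /= big_mkcond.
  rewrite [RHS]big_mkcond; apply: eq_bigr => C _; rewrite inE; case: (C \in porbits s) => //=.
  by case: eqP => [->|]; rewrite ?muln1 ?mul1n ?muln0 ?mul0n.
rewrite exchange_big /=.
apply: (@leq_trans (\sum_(C in porbits s) #|C|)); first by apply: leq_sum => C _; apply: inner_le.
rewrite (eqP (triv_porbits s)). by apply: leq_trans (max_card _) _; rewrite card_ord.
Qed.

Lemma tsum0 n (s : {perm 'I_n}) : tsum s 0 = 0.
Proof. by rewrite /tsum big_geq. Qed.

Lemma tsumS n (s : {perm 'I_n}) k : tsum s k.+1 = (tsum s k + k.+1 * cycle_count s k.+1)%N.
Proof. by rewrite /tsum big_nat_recr. Qed.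

Lemma tsum_mono n (s : {perm 'I_n}) k k' : (k <= k')%N -> (tsum s k <= tsum s k')%N.
Proof.
elim: k' => [|k' IH]; first by rewrite leqn0 => /eqP ->.
rewrite leq_eqVlt => /orP[/eqP -> //|lt].
by apply: leq_trans (IH lt) _; rewrite tsumS leq_addr.
Qed.

Lemma partialE_t n (s : {perm 'I_n}) k : partialE s k =
  if tsum s k == 0%N then 0%R else Rmax (ln (INR (tsum s k)) / ln (INR n))%R 0%R.
Proof. by []. Qed.

Lemma ln_le x y : (0 < x)%R -> (x <= y)%R -> (ln x <= ln y)%R.
Proof. move=> h [lt|->]; [left; exact: ln_increasing | lra]. Qed.

Lemma lnn_pos n : (1 < n)%N -> (0 < ln (INR n))%R.
Proof.
move=> h; rewrite -ln_1; apply: ln_increasing; first lra.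
have : (1 < n)%coq_nat by apply/ltP. move/lt_INR. by rewrite /= => ?.
Qed.

Lemma P_ge0 n (s : {perm 'I_n}) k : (0 <= partialE s k)%R.
Proof. rewrite partialE_t; case: eqP => _; [lra | apply: Rmax_r]. Qed.

Lemma P_le1 n (s : {perm 'I_n}) k : (1 < n)%N -> (partialE s k <= 1)%R.
Proof.
move=> n1; have ln0 := lnn_pos n1.
rewrite partialE_t; case: eqP => t0; first lra.
apply: Rmax_lub; last lra.
have tpos : (0 < INR (tsum s k))%R by apply: lt_0_INR; apply/ltP; rewrite lt0n; apply/eqP.
have : (ln (INR (tsum s k)) <= ln (INR n))%R.
  apply: ln_le => //; apply: le_INR; apply/leP; exact: tsum_le.
move=> h; apply (Rmult_le_reg_r (ln (INR n))) => //.
unfold Rdiv; rewrite Rmult_assoc Rinv_l; lra.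
Qed.

Lemma P_step n (s : {perm 'I_n}) k : (1 < n)%N -> (partialE s k <= partialE s k.+1)%R.
Proof.
move=> n1; have ln0 := lnn_pos n1.
rewrite (partialE_t s k); case: eqP => t0; first exact: P_ge0.
have le := tsum_mono s (leqnSn k).
rewrite partialE_t; case: eqP => t1.
  by exfalso; apply: t0; move: le; rewrite t1 leqn0 => /eqP.
apply: Rmax_lub; last apply: Rmax_r.
apply: Rle_trans (Rmax_l _ _).
have tpos : (0 < INR (tsum s k))%R by apply: lt_0_INR; apply/ltP; rewrite lt0n; apply/eqP.
have : (ln (INR (tsum s k)) <= ln (INR (tsum s k.+1)))%R.
  apply: ln_le => //; apply: le_INR; apply/leP; exact: le.
move=> h; unfold Rdiv; apply: Rmult_le_compat_r => //.
left; apply: Rinv_0_lt_compat => //.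
Qed.

Lemma P_mono n (s : {perm 'I_n}) k k' : (1 < n)%N -> (k <= k')%N ->
  (partialE s k <= partialE s k')%R.
Proof.
move=> n1; elim: k' => [|k' IH]; first by rewrite leqn0 => /eqP ->; lra.
rewrite leq_eqVlt => /orP[/eqP -> |lt]; first lra.
apply: Rle_trans (IH lt) (P_step _ _ n1).
Qed.

Lemma P0 n (s : {perm 'I_n}) : partialE s 0 = 0%R.
Proof. by rewrite partialE_t tsum0. Qed.

Lemma term_le n (s : {perm 'I_n}) m b : (1 < n)%N -> (0 < m)%N ->
  (e_coef s b.+1 / INR b.+1 <= (partialE s b.+1 - partialE s b) / INR m
     + partialE s (minn b.+1 m.-1) - partialE s (minn b m.-1))%R.
Proof.
move=> n1 m0; rewrite /e_coef [b.+1.-1]/=.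
have d0 := P_step s b n1.
set d := (partialE s b.+1 - partialE s b)%R.
have dpos : (0 <= d)%R by rewrite /d; lra.
have mpos : (0 < INR m)%R by apply: lt_0_INR; apply/ltP.
have bpos : (0 < INR b.+1)%R by apply: lt_0_INR; apply/ltP.
case: (ltnP b.+1 m) => hb.
  have e1 : minn b.+1 m.-1 = b.+1 by apply/minn_idPl; rewrite -ltnS prednK.
  have e2 : minn b m.-1 = b by apply/minn_idPl; rewrite -ltnS prednK // ltnW.
  rewrite e1 e2.
  have : (d / INR b.+1 <= d)%R.
    have h1 : (1 <= INR b.+1)%R by rewrite S_INR; have := pos_INR b; lra.
    unfold Rdiv; rewrite -{2}(Rmult_1_r d); apply: Rmult_le_compat_l => //.
    rewrite -Rinv_1; apply: Rinv_le_contravar; lra.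
  have : (0 <= d / INR m)%R by unfold Rdiv; apply: Rmult_le_pos => //; left; apply: Rinv_0_lt_compat.
  rewrite /d; lra.
have e1 : minn b.+1 m.-1 = m.-1 by apply/minn_idPr; rewrite -ltnS prednK // ltnW.
have e2 : minn b m.-1 = m.-1 by apply/minn_idPr; rewrite -ltnS prednK.
rewrite e1 e2.
have : (d / INR b.+1 <= d / INR m)%R.
  unfold Rdiv; apply: Rmult_le_compat_l => //; apply: Rinv_le_contravar => //.
  by apply: le_INR; apply/leP.
rewrite /d; lra.
Qed.

Lemma sum_le n (s : {perm 'I_n}) m k b : (1 < n)%N -> (0 < m)%N ->
  (List.fold_right Rplus 0%R (List.map (fun i => e_coef s i / INR i)%R (iota b.+1 k))
   <= (partialE s (b + k) - partialE s b) / INR m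
     + partialE s (minn (b + k) m.-1) - partialE s (minn b m.-1))%R.
Proof.
move=> n1 m0; elim: k b => [|k IH] b.
  rewrite addn0 /=. unfold Rdiv; rewrite Rminus_diag Rmult_0_l. lra.
rewrite /= -addSnnS.
have := IH b.+1. have := term_le s b n1 m0. unfold Rdiv. change (match b with 0%N => 1 | _.+1 => INR b + 1 end)%R with (INR b.+1). lra.
Qed.

Lemma tsum_bound n (s : {perm 'I_n}) m X : (0 <= X)%R ->
  (forall i : nat, (i < m)%N -> (INR (cycle_count s i) <= X)%R) ->
  forall k, (k < m)%N -> (INR (tsum s k) <= INR k * INR k * X)%R.
Proof.
move=> X0 hc; elim=> [|k IH] hk; first by rewrite tsum0 /=; lra.
rewrite tsumS plus_INR mult_INR.
have := IH (ltnW hk). have := hc _ hk. have := pos_INR k.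
rewrite S_INR => h1 h2 h3. nra.
Qed.

Theorem lemma2p6 :
  forall (eps : R) (m : nat), (0 < eps)%R -> (0 < m)%N ->
  exists (delta : R) (n0 : nat), (0 < delta)%R /\
    forall (n : nat) (s : {perm 'I_n}), (n0 < n)%N ->
      (forall i : nat, (i < m)%N -> (INR (cycle_count s i) <= Rpower (INR n) delta)%R) ->
      (Evalue s <= / INR m + eps)%R.
Proof.
move=> eps m he hm.
have [N HN] := INR_unbounded (exp (4 * ln (INR m) / eps)).
exists (eps / 2)%R, (N + 2)%N; split; first lra.
move=> n s hn hc.
have n1 : (1 < n)%N by apply: leq_ltn_trans hn; rewrite addn2.
have ln0 := lnn_pos n1.
have mpos : (0 < INR m)%R by apply: lt_0_INR; apply/ltP.
have npos : (0 < INR n)%R by apply: lt_0_INR; apply/ltP; apply: ltnW.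
set X := Rpower (INR n) (eps / 2).
have Xpos : (0 < X)%R by rewrite /X /Rpower; apply: exp_pos.
have key : (partialE s m.-1 <= eps)%R.
  rewrite partialE_t; case: eqP => t0; first lra.
  apply: Rmax_lub; last lra.
  have tpos : (0 < INR (tsum s m.-1))%R by apply: lt_0_INR; apply/ltP; rewrite lt0n; apply/eqP.
  have mlt : (m.-1 < m)%N by rewrite prednK.
  have tb := tsum_bound (Rlt_le _ _ Xpos) hc mlt.
  have hm1 : (INR m.-1 <= INR m)%R by apply: le_INR; apply/leP; apply: leq_pred.
  have hm2 : (0 <= INR m.-1)%R by apply: pos_INR.
  have tb2 : (INR (tsum s m.-1) <= INR m * INR m * X)%R.
    apply: Rle_trans tb _; apply: Rmult_le_compat_r; [lra|nra].
  have lt1 : (ln (INR (tsum s m.-1)) <= ln (INR m) + ln (INR m) + eps / 2 * ln (INR n))%R.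
    apply: Rle_trans (ln_le tpos tb2) _.
    rewrite ln_mult ?ln_mult ?/X ?ln_Rpower; try lra; first by apply: Rmult_lt_0_compat.
    exact: Xpos.
  have hN : (INR N < INR n)%R by apply: lt_INR; apply/ltP; apply: leq_trans hn; rewrite ltnS leq_addr.
  have hl : (4 * ln (INR m) / eps < ln (INR n))%R.
    rewrite -[X in (X < _)%R]ln_exp; apply: ln_increasing; [apply: exp_pos | lra].
  have hl2 : (4 * ln (INR m) < eps * ln (INR n))%R.
    replace (4 * ln (INR m))%R with (eps * (4 * ln (INR m) / eps))%R by (field; lra).
    by apply: Rmult_lt_compat_l.
  apply (Rmult_le_reg_r (ln (INR n))) => //.
  unfold Rdiv; rewrite Rmult_assoc Rinv_l; lra.
have hs := sum_le s n 0 n1 hm.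
rewrite add0n min0n P0 in hs.
have hQ : (partialE s (minn n m.-1) <= partialE s m.-1)%R by apply: P_mono => //; apply: geq_minr.
have hP : (partialE s n / INR m <= / INR m)%R.
  unfold Rdiv; rewrite -{2}(Rmult_1_l (/ INR m)); apply: Rmult_le_compat_r.
    by left; apply: Rinv_0_lt_compat.
  exact: P_le1.
rewrite /Evalue. unfold Rdiv in *. lra.
Qed.
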